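(* There exist absolute constants $C, c > 0$ and $n_0$ such that for every integer $n \ge n_0$ that is a power of $2$, there is a Boolean function $f:\{0,1\}^{2n}\to\{0,1\}$ satisfying: (1) $\mathrm{Inf}^{-}_i[f] = 0$ for all $i \in \{1,\dots,n\}$; (2) $\mathrm{Inf}^{-}_i[f] \le C/n$ for all $i \in \{n+1,\dots,2n\}$; (3) $\varepsilon(f) \ge c$. In particular, there is no absolute constant $c'>0$ such that every $f:\{0,1\}^m\to\{0,1\}$ has a coordinate $i\in[m]$ with $\mathrm{Inf}^{-}_i[f] \ge c'\,\varepsilon(f)\cdot \frac{\log m}{m}$.
   Context: For $x,y\in\{0,1\}^m$, write $x\preccurlyeq y$ if $x_i\le y_i$ for all $i\in[m]$. A function $g:\{0,1\}^m\to\{0,1\}$ is monotone if $x\preccurlyeq y$ implies $g(x)\le g(y)$. For $x\in\{0,1\}^m$ and $i\in[m]$, $x^{\oplus i}$ denotes $x$ with the $i$-th coordinate flipped. For $f:\{0,1\}^m\to\{0,1\}$, the negative influence of coordinate $i$ is $\mathrm{Inf}^{-}_i[f] := \frac{1}{2^{m-1}}\#\{x\in\{0,1\}^m : f(x) > f(x^{\oplus i}) \text{ and } x\preccurlyeq x^{\oplus i}\}$. The distance to monotonicity is $\varepsilon(f) := \min_{g \text{ monotone}} \Pr_{\mathbf{x}\sim\{0,1\}^m}[f(\mathbf{x})\ne g(\mathbf{x})]$, where $\mathbf{x}$ is uniform. *)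

(* Defs.v *)
From mathcomp Require Import all_boot all_order all_algebra.
From mathcomp Require Import reals exp.
Set Implicit Arguments. Unset Strict Implicit. Unset Printing Implicit Defensive.
Import Order.TTheory GRing.Theory Num.Theory.
Local Open Scope ring_scope.

Definition cube (m : nat) := {ffun 'I_m -> bool}.

Definition cle (m : nat) (x y : cube m) : bool := [forall j, (x j <= y j)%N].

Definition flip (m : nat) (x : cube m) (i : 'I_m) : cube m :=
  [ffun j => if j == i then ~~ x j else x j].

Definition monotone (m : nat) (g : cube m -> bool) : Prop :=
  forall x y : cube m, cle x y -> (g x <= g y)%N.

(* Boolean version, used to range over the finite set of monotone functions. *)
Definition monotoneb (m : nat) (g : {ffun cube m -> bool}) : bool :=
  [forall x : cube m, forall y : cube m, cle x y ==> (g x <= g y)%N].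

Definition neg_inf (R : realType) (m : nat) (f : cube m -> bool) (i : 'I_m) : R :=
  (#|[set x : cube m | (f (flip x i) < f x)%N && cle x (flip x i)]|)%:R
    / (2 ^+ m.-1 : R).

Definition ndisagree (m : nat) (f g : cube m -> bool) : nat :=
  #|[set x : cube m | f x != g x]|.

(* The initial value 2^m of the min is an upper
   bound of every disagreement count, so it does not affect the minimum. *)
Definition dist_mono (R : realType) (m : nat) (f : cube m -> bool) : R :=
  (\big[minn/(2 ^ m)%N]_(g : {ffun cube m -> bool} | monotoneb g)
      ndisagree f g)%:R / (2 ^+ m : R).

(* Main.v *)
Require Import Defs.
From mathcomp Require Import all_boot all_order all_algebra.
From mathcomp Require Import reals exp.
From mathcomp Require Import zify ring lra.

Module PA.
Set Implicit Arguments. Unset Strict Implicit. Unset Printing Implicit Defensive.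
Local Open Scope nat_scope.

Lemma pow2_aux a b c d : a <= b -> c <= d -> a < c -> (2 ^ a + 2 ^ b = 2 ^ c + 2 ^ d)%N -> False.
Proof.
move=> ab cd ac E.
have [c' Ec] : exists c', c = a.+1 + c' by exists (c - a.+1); lia.
have [d' Ed] : exists d', d = a.+1 + d' by exists (d - a.+1); lia.
subst c d.
have p0 : 0 < 2 ^ a by rewrite expn_gt0.
have X0 : 0 < 2 ^ c' by rewrite expn_gt0.
have Y0 : 0 < 2 ^ d' by rewrite expn_gt0.
move: E; rewrite !expnD !expnS.
case: (ltngtP a b) ab => // [lab|eab] _.
  have [b' Eb] : exists b', b = a.+1 + b' by exists (b - a.+1); lia.
  subst b; rewrite expnD expnS => E.
  have E2 : 2 ^ a * (1 + 2 * 2 ^ b') = 2 ^ a * (2 * 2 ^ c' + 2 * 2 ^ d').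
    move: E; rewrite !mulnDr; lia.
  move/eqP: E2; rewrite eqn_pmul2l // => /eqP; lia.
by subst b => E; nia.
Qed.

Lemma pow2_le a b c d : a <= b -> c <= d -> (2 ^ a + 2 ^ b = 2 ^ c + 2 ^ d)%N -> a = c /\ b = d.
Proof.
move=> ab cd E.
have ac : a = c.
  case: (ltngtP a c) => // h; exfalso.
    exact: (pow2_aux ab cd h E).
  exact: (pow2_aux cd ab h (esym E)).
subst c; split => //.
by apply: (@expnI 2) => //; apply/eqP; rewrite -(eqn_add2l (2 ^ a)) E.
Qed.

Lemma pow2_sum a b c d : (2 ^ a + 2 ^ b = 2 ^ c + 2 ^ d)%N -> (a = c /\ b = d) \/ (a = d /\ b = c).
Proof.
case: (leqP a b) => ab; case: (leqP c d) => cd E.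
- by left; apply: pow2_le.
- by have [] := @pow2_le a b d c ab (ltnW cd) ltac:(lia); right.
- by have [] := @pow2_le b a c d (ltnW ab) cd ltac:(lia); right.
- by have [] := @pow2_le b a d c (ltnW ab) (ltnW cd) ltac:(lia); left.
Qed.

Lemma sidon j l t s t' s' : (j + 2 ^ t = l + 2 ^ s)%N -> (j + 2 ^ t' = l + 2 ^ s')%N -> j != l -> t = t'.
Proof.
move=> E1 E2 jl.
have E : 2 ^ t + 2 ^ s' = 2 ^ t' + 2 ^ s by lia.
case: (pow2_sum E) => [[-> _] | [ts _]] //.
by subst s; move: E1; rewrite addnC [l + _]addnC => /addnI /eqP; rewrite (negbTE jl).
Qed.

End PA.
Import PA.

Module PP1.
Set Implicit Arguments. Unset Strict Implicit. Unset Printing Implicit Defensive.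

Lemma card_pattern (M : nat) (A : {set 'I_M}) (b : 'I_M -> bool) :
  #|[set z : cube M | [forall i in A, z i == b i]]| = 2 ^ (M - #|A|).
Proof.
pose F := fun (i : 'I_M) (y : bool) => (i \notin A) || (y == b i).
have -> : #|[set z : cube M | [forall i in A, z i == b i]]| = #|(family F : simpl_pred (cube M))|.
  apply: eq_card => z; rewrite inE; apply/forallP/familyP => H i.
    by have := H i; rewrite /F; case: (i \in A).
  by have := H i; rewrite /F; case: (i \in A).
rewrite card_family.
have -> : foldr muln 1 [seq #|F x| | x : 'I_M] = \prod_(x : 'I_M) #|F x|.
  rewrite /image_mem -big_enum /=. by elim: (enum _) => [|x s IH] /=; [rewrite big_nil | rewrite big_cons IH].
rewrite (eq_bigr (fun x => if x \in A then 1 else 2)); last first.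
  move=> i _; rewrite /F; case: (i \in A) => /=.
    by rewrite -(card1 (b i)); apply: eq_card => y.
  by rewrite -card_bool; apply: eq_card => y.
rewrite (eq_bigr (fun x => if x \in ~: A then 2 else 1)); last first.
  by move=> i _; rewrite in_setC; case: (i \in A).
rewrite -big_mkcond prod_nat_const.
by have := cardsC A; rewrite card_ord => HM; congr (2 ^ _); lia.
Qed.

End PP1.
Import PP1.

Module PB.
Unset Printing Implicit Defensive.
Local Open Scope nat_scope.

Definition Sw (n K j : nat) : {set 'I_(2 * n)} :=
  [set i : 'I_(2 * n) | [exists t : 'I_(K.-1), val i == j + 2 ^ t]].
Definition Ww n K j (z : cube (2 * n)) : bool := [forall i in Sw n K j, z i].
Definition Yw n j (z : cube (2 * n)) : bool :=
  [forall i : 'I_(2 * n), (val i == n + j) ==> ~~ z i].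
Definition fF n K (z : cube (2 * n)) : bool :=
  [exists j : 'I_(2 ^ (K - 4)), Ww n K j z && Yw n j z].

Set Implicit Arguments. Unset Strict Implicit.

Lemma flipE m (z : cube m) i i' : flip z i i' = if i' == i then ~~ z i else z i'.
Proof. by rewrite /flip ffunE; case: eqP => [->|]. Qed.

Lemma cle_flip m (z : cube m) i : cle z (flip z i) = ~~ z i.
Proof.
apply/forallP/idP => [H | H j]; first by have := H i; rewrite flipE eqxx; case: (z i).
by rewrite flipE; case: eqP => [->|]; [move: H; case: (z i) | ].
Qed.

Lemma Ww_mono n K j (z z' : cube (2 * n)) : cle z z' -> Ww n K j z -> Ww n K j z'.
Proof.
move=> /forallP H /forallP W; apply/forallP => i; apply/implyP => iS.
by have := H i; have := implyP (W i) iS; case: (z i); case: (z' i).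
Qed.

Lemma pow_bound K j t : 5 <= K -> j < 2 ^ (K - 4) -> t < K.-1 -> j + 2 ^ t < 2 ^ K.
Proof.
move=> HK hj ht.
have h1 : 2 ^ t <= 2 ^ (K - 4) * 4.
  rewrite (_ : 2 ^ (K - 4) * 4 = 2 ^ (K - 2)); last first.
    have -> : K - 2 = (K - 4) + 2 by lia.
    by rewrite expnD.
  by apply: leq_pexp2l => //; lia.
have -> : 2 ^ K = 2 ^ (K - 4) * 16.
  by rewrite -(expnD 2 (K - 4) 4); congr (2 ^ _); lia.
lia.
Qed.

Lemma Sw_lt n K j i : n = 2 ^ K -> 5 <= K -> j < 2 ^ (K - 4) -> i \in Sw n K j -> val i < n.
Proof.
move=> Hn HK hj; rewrite inE => /existsP [t /eqP ->].
rewrite Hn; exact: pow_bound.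
Qed.

Lemma card_Sw n K j : n = 2 ^ K -> 5 <= K -> j < 2 ^ (K - 4) -> #|Sw n K j| = K.-1.
Proof.
move=> Hn HK hj.
have lt (t : 'I_(K.-1)) : j + 2 ^ t < 2 * n.
  have := @pow_bound K j t HK hj (ltn_ord t); rewrite -Hn; lia.
pose g (t : 'I_(K.-1)) : 'I_(2 * n) := Ordinal (lt t).
have -> : Sw n K j = g @: setT.
  apply/setP => i; rewrite inE; apply/existsP/imsetP => [[t /eqP Et]|[t _ ->]].
    by exists t => //; apply: val_inj; rewrite Et.
  by exists t.
rewrite card_imset ?cardsT ?card_ord //.
move=> t t' /(congr1 val) /= /addnI /(@expnI 2 isT) ?.
exact: val_inj.
Qed.

Lemma Sw_inter n K j l : j != l -> #|Sw n K j :&: Sw n K l| <= 1.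
Proof.
move=> jl; apply/card_le1_eqP => i i'; rewrite !inE.
move=> /andP [/existsP [t /eqP Et] /existsP [s /eqP Es]].
move=> /andP [/existsP [t' /eqP Et'] /existsP [s' /eqP Es']].
apply: val_inj; rewrite Et Et'.
have := @sidon j l t s t' s' (etrans (esym Et) Es) (etrans (esym Et') Es') jl.
by move=> ->.
Qed.

Lemma part1 n K (z : cube (2 * n)) (i : 'I_(2 * n)) :
  val i < n -> cle z (flip z i) -> fF n K z -> fF n K (flip z i).
Proof.
move=> hi hc /existsP [j /andP [W Y]]; apply/existsP; exists j; apply/andP; split.
  exact: Ww_mono hc W.
apply/forallP => i'; apply/implyP => /eqP e; rewrite flipE.
have -> : (i' == i) = false by apply/negP => /eqP ei; subst i'; lia.
by have := forallP Y i'; rewrite e eqxx.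
Qed.

Lemma flipK m (z : cube m) i : flip (flip z i) i = z.
Proof. by apply/ffunP => i'; rewrite !flipE eqxx; case: eqP => [->|]; rewrite ?negbK. Qed.

Lemma Ww_flip_hi n K j (z : cube (2 * n)) (i : 'I_(2 * n)) :
  n = 2 ^ K -> 5 <= K -> j < 2 ^ (K - 4) -> n <= val i -> Ww n K j (flip z i) = Ww n K j z.
Proof.
move=> Hn HK hj hi; apply: eq_forallb => i'; rewrite flipE.
case: eqP => // ei; case: (boolP (i' \in Sw n K j)) => //= iS.
by have := Sw_lt Hn HK hj iS; rewrite ei ltnNge hi.
Qed.

Lemma part2_sub n K (z : cube (2 * n)) (i : 'I_(2 * n)) :
  n = 2 ^ K -> 5 <= K -> n <= val i ->
  fF n K (flip z i) < fF n K z -> cle z (flip z i) ->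
  [&& val i - n < 2 ^ (K - 4), Ww n K (val i - n) z & ~~ z i].
Proof.
move=> Hn HK hi hlt; rewrite cle_flip => zi; rewrite zi andbT.
move: hlt; case: (boolP (fF n K z)) => [/existsP [j /andP [W Y]] | ]; last by [].
case: (boolP (fF n K (flip z i))) => // nF _.
case: (eqVneq (val i) (n + j)) => [e | ne].
  by rewrite e addKn ltn_ord.
exfalso; move/negP: nF; apply; apply/existsP; exists j; apply/andP; split.
  by apply: Ww_mono W; rewrite cle_flip.
apply/forallP => i'; apply/implyP => /eqP e; rewrite flipE.
have -> : (i' == i) = false by apply/negP => /eqP ei; subst i'; rewrite e eqxx in ne.
by have := forallP Y i'; rewrite e eqxx.
Qed.

Lemma part2_card n K (i : 'I_(2 * n)) :
  n = 2 ^ K -> 5 <= K -> n <= val i ->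
  #|[set z : cube (2 * n) | (fF n K (flip z i) < fF n K z) && cle z (flip z i)]|
    <= 2 ^ (2 * n - K).
Proof.
move=> Hn HK hi.
case: (ltnP (val i - n) (2 ^ (K - 4))) => hj; last first.
  rewrite (_ : [set _ | _] = set0) ?cards0 //.
  apply/setP => z; rewrite !inE; apply/negP => /andP [h1 h2].
  by have := part2_sub Hn HK hi h1 h2; rewrite ltnNge hj.
set A := i |: Sw n K (val i - n).
have cA : #|A| = K.
  rewrite cardsU1 (card_Sw Hn HK hj).
  have -> : i \notin Sw n K (val i - n).
    by apply/negP => /(Sw_lt Hn HK hj); rewrite ltnNge hi.
  lia.
have <- : 2 ^ (2 * n - #|A|) = 2 ^ (2 * n - K) by rewrite cA.
rewrite -(card_pattern A (fun i' => i' != i)).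
apply: subset_leq_card; apply/subsetP => z; rewrite !inE => /andP [h1 h2].
have /and3P [_ W zi] := part2_sub Hn HK hi h1 h2.
apply/forallP => i'; apply/implyP => /setU1P [-> | iS].
  by rewrite eqxx; move: zi; case: (z i).
have -> : i' != i by apply/negP => /eqP ei; move: iS; rewrite ei => /(Sw_lt Hn HK hj); rewrite ltnNge hi.
by rewrite (implyP (forallP W i') iS).
Qed.

Unset Implicit Arguments.
Definition Hs n K (j : 'I_(2 ^ (K - 4))) : {set cube (2 * n)} :=
  [set z | Ww n K j z && [forall l : 'I_(2 ^ (K - 4)), (l != j) ==> ~~ Ww n K l z]].
Definition Gs n K (j : 'I_(2 ^ (K - 4))) : {set cube (2 * n)} :=
  [set z | Yw n j z && (z \in Hs n K j)].

Set Implicit Arguments.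

Lemma Gs_key n K (j : 'I_(2 ^ (K - 4))) (y : 'I_(2 * n)) (z : cube (2 * n)) :
  n = 2 ^ K -> 5 <= K -> val y = n + j -> z \in Gs n K j ->
  [/\ fF n K z, ~~ fF n K (flip z y), cle z (flip z y) & flip z y \in Hs n K j].
Proof.
move=> Hn HK hy; rewrite !inE => /and3P [Y W Hl].
have hyn : n <= val y by rewrite hy leq_addr.
have zy : ~~ z y by have := forallP Y y; rewrite hy eqxx.
have WF (l : 'I_(2 ^ (K - 4))) : Ww n K l (flip z y) = Ww n K l z.
  exact: Ww_flip_hi Hn HK (ltn_ord l) hyn.
split.
- by apply/existsP; exists j; rewrite W Y.
- apply/negP => /existsP [l /andP [Wl Yl]].
  rewrite WF in Wl.
  case: (eqVneq l j) => [elj | nlj]; last by have := implyP (forallP Hl l) nlj; rewrite Wl.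
  subst l; have := forallP Yl y; rewrite hy eqxx /= flipE eqxx.
  by move: zy; case: (z y).
- by rewrite cle_flip.
- rewrite WF W /=; apply/forallP => l; rewrite WF; exact: (forallP Hl l).
Qed.

Lemma match_le n K (g : cube (2 * n) -> bool) (j : 'I_(2 ^ (K - 4))) (y : 'I_(2 * n)) :
  n = 2 ^ K -> 5 <= K -> val y = n + j -> monotone g ->
  #|Gs n K j| <= #|[set z | fF n K z != g z] :&: Hs n K j|.
Proof.
move=> Hn HK hy mg.
pose psi z := if fF n K z != g z then z else flip z y.
have inj : {in Gs n K j &, injective psi}.
  move=> z1 z2 G1 G2; rewrite /psi.
  have [F1 nF1 _ _] := Gs_key Hn HK hy G1.
  have [F2 nF2 _ _] := Gs_key Hn HK hy G2.
  case: ifP => d1; case: ifP => d2.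
  - by [].
  - by move=> e; rewrite e in F1; rewrite (negbTE nF2) in F1.
  - by move=> e; rewrite -e in F2; rewrite (negbTE nF1) in F2.
  - by move=> e; rewrite -(flipK z1 y) e flipK.
rewrite -(card_in_imset inj); apply: subset_leq_card; apply/subsetP => w.
case/imsetP => z G ->; have [F nF c H] := Gs_key Hn HK hy G.
rewrite /psi; case: ifP => d.
  by move: G; rewrite !inE d /= => /andP [].
rewrite !inE in H *; rewrite H andbT.
move/negbFE: d => /eqP d.
have := mg _ _ c; rewrite -d F; move: nF; case: (fF n K (flip z y)); case: (g (flip z y)) => //.
Qed.

Lemma card_sum (T : finType) (A : {set T}) : #|A| = \sum_(z : T) (z \in A).
Proof. by rewrite -sum1_card big_mkcond /=; apply: eq_bigr => z _; case: (z \in A). Qed.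

Lemma sumH n K (D : {set cube (2 * n)}) :
  \sum_(j : 'I_(2 ^ (K - 4))) #|D :&: Hs n K j| <= #|D|.
Proof.
rewrite (eq_bigr (fun j => \sum_z (z \in D :&: Hs n K j))); last by move=> j _; rewrite card_sum.
rewrite exchange_big /= [#|D|]card_sum; apply: leq_sum => z _.
case: (boolP (z \in D)) => zD; last by rewrite big1 // => j _; rewrite in_setI (negbTE zD).
rewrite (eq_bigr (fun j => nat_of_bool (j \in [set j : 'I_(2 ^ (K - 4)) | z \in Hs n K j]))); last first.
  by move=> j _; rewrite in_setI zD !inE.
rewrite -card_sum; apply/card_le1_eqP => j1 j2; rewrite !inE.
move=> /andP [W1 H1] /andP [W2 H2]; apply/eqP; apply/negPn/negP => ne.
have := forallP H1 j2; rewrite W2 implybF negbK => /eqP e; by rewrite e eqxx in ne.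
Qed.

Lemma Gs_lb n K (j : 'I_(2 ^ (K - 4))) :
  #|[set z : cube (2 * n) | Ww n K j z && Yw n j z]| <=
  #|Gs n K j| + \sum_(l : 'I_(2 ^ (K - 4)) | l != j)
                   #|[set z : cube (2 * n) | Ww n K j z && Ww n K l z]|.
Proof.
rewrite (eq_bigr (fun l : 'I_(2 ^ (K - 4)) => \sum_z (z \in [set z : cube (2 * n) | Ww n K j z && Ww n K l z])));
  last by move=> l _; rewrite card_sum.
rewrite exchange_big /= !card_sum -big_split /=; apply: leq_sum => z _.
rewrite inE; case/boolP: (Ww n K j z && Yw n j z) => //= /andP [W Y].
case: (boolP [forall l : 'I_(2 ^ (K - 4)), (l != j) ==> ~~ Ww n K l z]) => Hl.
  by rewrite !inE Y W Hl.
move/forallPn: Hl => [l]; rewrite negb_imply negbK => /andP [nl Wl].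
rewrite (bigD1 l) //=.
have -> : z \in [set z0 : cube (2 * n) | Ww n K j z0 & Ww n K l z0] by rewrite inE W Wl.
by rewrite addnCA.
Qed.

Lemma card_val1 M c : #|[set i : 'I_M | val i == c]| <= 1.
Proof. by apply/card_le1_eqP => i i'; rewrite !inE => /eqP e /eqP e'; apply: val_inj; rewrite e e'. Qed.

Lemma cardE_lb n K (j : 'I_(2 ^ (K - 4))) :
  n = 2 ^ K -> 5 <= K ->
  2 ^ (2 * n - K) <= #|[set z : cube (2 * n) | Ww n K j z && Yw n j z]|.
Proof.
move=> Hn HK.
set A := Sw n K j :|: [set i : 'I_(2 * n) | val i == n + j].
have cA : #|A| <= K.
  have e := cardsU (Sw n K j) [set i : 'I_(2 * n) | val i == n + j].
  rewrite (card_Sw Hn HK (ltn_ord j)) -/A in e.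
  have cB := card_val1 (2 * n) (n + j).
  rewrite e; apply: (leq_trans (leq_subr _ _)); apply: (leq_trans (leq_add (leqnn _) cB)); lia.
apply: (@leq_trans (2 ^ (2 * n - #|A|))).
  by apply: leq_pexp2l => //; lia.
rewrite -(card_pattern A (fun i => val i != n + j)).
apply: subset_leq_card; apply/subsetP => z; rewrite !inE => /forallP P.
apply/andP; split.
  apply/forallP => i; apply/implyP => iS.
  have := implyP (P i); rewrite in_setU iS => /(_ isT) /eqP ->.
  by have := Sw_lt Hn HK (ltn_ord j) iS; apply: contraTneq => ->; lia.
apply/forallP => i; apply/implyP => e.
have iB : i \in [set i0 : 'I_(2 * n) | val i0 == n + j] by rewrite inE.
by have := implyP (P i); rewrite in_setU iB orbT e => /(_ isT) /eqP ->.
Qed.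

Lemma cardWW_ub n K (j l : 'I_(2 ^ (K - 4))) :
  n = 2 ^ K -> 5 <= K -> j != l ->
  #|[set z : cube (2 * n) | Ww n K j z && Ww n K l z]| <= 2 ^ (2 * n - (2 * K - 3)).
Proof.
move=> Hn HK jl.
set A := Sw n K j :|: Sw n K l.
have cA : 2 * K - 3 <= #|A|.
  have := cardsU (Sw n K j) (Sw n K l).
  rewrite (card_Sw Hn HK (ltn_ord j)) (card_Sw Hn HK (ltn_ord l)) -/A.
  have := @Sw_inter n K j l jl; lia.
apply: (@leq_trans (2 ^ (2 * n - #|A|))); last first.
  by apply: leq_pexp2l => //; lia.
rewrite -(card_pattern A (fun _ => true)).
apply: subset_leq_card; apply/subsetP => z; rewrite !inE => /andP [W1 W2].
apply/forallP => i; apply/implyP; rewrite in_setU => /orP [iS|iS].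
  by rewrite (implyP (forallP W1 i) iS).
by rewrite (implyP (forallP W2 i) iS).
Qed.

Lemma monotoneb_mono m (g : {ffun cube m -> bool}) : monotoneb g -> monotone g.
Proof. by move=> /forallP H x y cxy; have := forallP (H x) y; rewrite cxy. Qed.

Lemma dist_count n K (g : cube (2 * n) -> bool) :
  n = 2 ^ K -> 5 <= K -> monotone g ->
  2 ^ (2 * n - 5) <= #|[set z : cube (2 * n) | fF n K z != g z]|.
Proof.
move=> Hn HK mg.
have Kn : K < n by rewrite Hn ltn_expl.
have mn : 2 ^ (K - 4) <= n by rewrite Hn leq_exp2l //; lia.
set D := [set z : cube (2 * n) | fF n K z != g z].
apply: (leq_trans _ (@sumH n K D)).
have Gj (j : 'I_(2 ^ (K - 4))) : 2 ^ (2 * n - K - 1) <= #|D :&: Hs n K j|.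
  have hy : n + j < 2 * n by have := ltn_ord j; lia.
  apply: (leq_trans _ (match_le (y := Ordinal hy) Hn HK erefl mg)).
  have h1 := cardE_lb j Hn HK.
  have h2 := @Gs_lb n K j.
  have h3 : \sum_(l : 'I_(2 ^ (K - 4)) | l != j)
              #|[set z : cube (2 * n) | Ww n K j z && Ww n K l z]|
            <= 2 ^ (K - 4) * 2 ^ (2 * n - (2 * K - 3)).
    rewrite big_mkcond /=.
    apply: (@leq_trans (\sum_(l : 'I_(2 ^ (K - 4))) 2 ^ (2 * n - (2 * K - 3)))).
      apply: leq_sum => l _; case: ifP => // nl.
      by apply: cardWW_ub => //; rewrite eq_sym nl.
    by rewrite sum_nat_const card_ord.
  have e1 : 2 ^ (K - 4) * 2 ^ (2 * n - (2 * K - 3)) = 2 ^ (2 * n - K - 1).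
    by rewrite -expnD; congr (2 ^ _); lia.
  have e2 : 2 ^ (2 * n - K) = 2 * 2 ^ (2 * n - K - 1).
    by rewrite -expnS; congr (2 ^ _); lia.
  lia.
apply: (@leq_trans (\sum_(j : 'I_(2 ^ (K - 4))) 2 ^ (2 * n - K - 1))); last first.
  by apply: leq_sum => j _; exact: Gj.
rewrite sum_nat_const card_ord -expnD; apply: leq_pexp2l => //; lia.
Qed.

End PB.
Import PB.

Module PC.
Import Order.TTheory GRing.Theory Num.Theory.
Local Open Scope ring_scope.

Lemma negInf_lo (R : realType) n K (i : 'I_(2 * n)) :
  n = (2 ^ K)%N -> (5 <= K)%N -> (i < n)%N -> neg_inf R (fF n K) i = 0.
Proof.
move=> Hn HK hi; rewrite /neg_inf.
rewrite (_ : [set _ | _] = set0) ?cards0 ?mul0r //.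
apply/setP => z; rewrite !inE; apply/negP => /andP [h1 h2].
move: h1 (@part1 n K z i hi h2).
by case: (fF n K z); case: (fF n K (flip z i)) => //= _ /(_ isT).
Qed.

Lemma negInf_hi (R : realType) n K (i : 'I_(2 * n)) :
  n = (2 ^ K)%N -> (5 <= K)%N -> (n <= i)%N -> neg_inf R (fF n K) i <= 2 / n%:R.
Proof.
move=> Hn HK hi; rewrite /neg_inf.
have hc := part2_card Hn HK hi.
set c := #|_| in hc *.
have Kn : (K < n)%N by rewrite Hn ltn_expl.
have n0 : 0 < n%:R :> R by rewrite ltr0n; lia.
rewrite ler_pdivrMr ?exprn_gt0 // mulrAC ler_pdivlMr //.
rewrite -natrX -!natrM ler_nat.
apply: (leq_trans (leq_mul hc (leqnn n))).
have -> : (2 * 2 ^ (2 * n).-1 = 2 ^ (2 * n - K) * 2 ^ K)%N.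
  by rewrite -expnS -expnD; congr (2 ^ _)%N; lia.
by rewrite -Hn.
Qed.

Lemma dist_lo (R : realType) n K :
  n = (2 ^ K)%N -> (5 <= K)%N -> 1 / 32 <= dist_mono R (fF n K).
Proof.
move=> Hn HK; rewrite /dist_mono.
have Kn : (K < n)%N by rewrite Hn ltn_expl.
have hb : (2 ^ (2 * n - 5) <= \big[minn/(2 ^ (2 * n))%N]_(g : {ffun cube (2 * n) -> bool} | monotoneb g)
             ndisagree (fF n K) g)%N.
  apply: (big_ind (fun v => 2 ^ (2 * n - 5) <= v)%N).
  - by apply: leq_pexp2l => //; lia.
  - by move=> x y hx hy; rewrite leq_min hx hy.
  - by move=> g mg; exact: dist_count Hn HK (monotoneb_mono mg).
set v := \big[minn/_]_(_ | _) _ in hb *.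
have X0 : 0 < (2 : R) ^+ (2 * n) by rewrite exprn_gt0.
rewrite ler_pdivlMr //.
have e : (2 : R) ^+ (2 * n) = 2 ^+ (2 * n - 5) * 2 ^+ 5 by rewrite -exprD subnK //; lia.
rewrite e -natrX.
apply: (@le_trans _ _ ((2 ^ (2 * n - 5))%N%:R)); last by rewrite ler_nat.
rewrite natrX.
have -> : (2 : R) ^+ 5 = 32 by rewrite -natrX.
rewrite mul1r mulrC -mulrA divff ?mulr1 //.
by rewrite pnatr_eq0.
Qed.

End PC.
Import PC.

Unset Implicit Arguments.
Import Order.TTheory GRing.Theory Num.Theory.
Local Open Scope ring_scope.
Theorem mainTheorem1 (R : realType) :
  (exists (C c : R) (n0 : nat), 0 < C /\ 0 < c /\
     forall n : nat, (n0 <= n)%N -> (exists k : nat, n = (2 ^ k)%N) ->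
       exists f : cube (2 * n) -> bool,
         (forall i : 'I_(2 * n), (i < n)%N -> neg_inf R f i = 0) /\
         (forall i : 'I_(2 * n), (n <= i)%N -> neg_inf R f i <= C / n%:R) /\
         c <= dist_mono R f)
  /\
  ~ (exists c' : R, 0 < c' /\
       forall (m : nat) (f : cube m -> bool), (0 < m)%N ->
         exists i : 'I_m,
           c' * dist_mono R f * (ln (m%:R : R) / m%:R) <= neg_inf R f i).
Proof.
split.
  exists 2, (1 / 32), 32%N; split; first by [].
  split; first by rewrite divr_gt0.
  move=> n hn [K Hn].
  have HK : (5 <= K)%N.
    by move: hn; rewrite Hn -[32%N]/(2 ^ 5)%N leq_exp2l.
  exists (fF n K); split; first by move=> i hi; exact: negInf_lo.
  split; first by move=> i hi; exact: negInf_hi.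
  exact: dist_lo.
move=> [c' [c0 H]].
have l2 : 0 < ln (2 : R) by apply: ln_gt0; lra.
set B := 128 / (c' * ln 2).
set K := maxn 5 (Num.truncn B).
have HK : (5 <= K)%N by rewrite leq_maxl.
have hB : B < K.+1%:R.
  apply: (lt_le_trans (Num.Theory.truncnS_gt B)); rewrite ler_nat ltnS leq_maxr.
  by [].
pose n := (2 ^ K)%N.
have Hn : n = (2 ^ K)%N by [].
have n0 : (0 < n)%N by rewrite expn_gt0.
have [i Hi] := H (2 * n)%N (fF n K) ltac:(lia).
have hneg : neg_inf R (fF n K) i <= 2 / n%:R.
  case: (ltnP i n) => hi; last exact: negInf_hi.
  by rewrite (@negInf_lo R n K i Hn HK hi) divr_ge0 // ler0n.
have hd := @dist_lo R n K Hn HK.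
set L := ln ((2 * n)%N%:R : R) in Hi.
have eL : L = K.+1%:R * ln 2.
  rewrite /L (_ : (2 * n)%N = (2 ^ K.+1)%N); last by rewrite expnS.
  by rewrite natrX lnXn // mulr_natl.
have L0 : 0 <= L by rewrite eL mulr_ge0 // ltW.
set N := n%:R : R.
have N0 : 0 < N by rewrite ltr0n.
have h1 : c' * (1 / 32) * (L / (2 * N)) <= 2 / N.
  apply: le_trans hneg; apply: le_trans Hi.
  rewrite natrM -/N.
  apply: ler_wpM2r; first by rewrite divr_ge0 // mulr_ge0 // ltW.
  by apply: ler_wpM2l => //; rewrite ltW.
have h2 : c' * L <= 128.
  have e : c' * (1 / 32) * (L / (2 * N)) = (c' * L / 64) / N by field; rewrite gt_eqF.
  rewrite e ler_pdivrMr // divfK ?gt_eqF // in h1.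
  lra.
have h3 : 128 < c' * L.
  have p : 0 < c' * ln 2 by rewrite mulr_gt0.
  have e128 : 128 = (c' * ln 2) * B by rewrite /B mulrC divfK // gt_eqF.
  have := hB; rewrite -(ltr_pM2l p) -e128 => h.
  suff -> : c' * L = c' * ln 2 * K.+1%:R by [].
  rewrite eL; ring.
lra.
Qed.
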